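(* Let $L>2$, $\Delta=L^{-1}$, $\varepsilon_1=24\exp(-L)$, and define $$\Phi_\pm(x)=L\int_{-1/2\mp\Delta^{1/2}}^{1/2\pm\Delta^{1/2}}\Gamma\big((x-\mu)L\big)\,\mathrm{d}\mu\ \pm\ \varepsilon_1\Gamma(x),$$ where $\Gamma(x)=\exp(-\pi x^2)$. Let $\chi$ be the characteristic function of $[-1/2,1/2)$. Then $\Phi_-(x)\le\chi(x)\le\Phi_+(x)$ for all $x\in\mathbb{R}$, and $$\int_{-\infty}^{\infty}\Phi_\pm(x)\,\mathrm{d}x=1\pm(2\Delta^{1/2}+\varepsilon_1).$$
   Context: In $\Phi_\pm$ the upper signs go with $\Phi_+$ and the lower signs with $\Phi_-$. $\Gamma$ here denotes the Gaussian $\exp(-\pi x^2)$, not Euler's Gamma function. *)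

(* Defs.v *)
From Stdlib Require Import Reals Lra ClassicalEpsilon.
Open Scope R_scope.

Definition Gam (x : R) : R := exp (- PI * x ^ 2).

(* Oriented Riemann integral of f from a to b (value of RiemannInt when f is
   Riemann integrable on [a,b]; an unspecified real otherwise). *)
Definition Rint (f : R -> R) (a b : R) : R :=
  epsilon (inhabits 0)
    (fun v => exists pr : Riemann_integrable f a b, RiemannInt pr = v).

Definition improper_int_R (f : R -> R) (l : R) : Prop :=
  (forall a b : R, inhabited (Riemann_integrable f a b)) /\
  (forall eps : R, 0 < eps -> exists M : R, forall a b : R,
      a <= - M -> M <= b -> Rabs (Rint f a b - l) < eps).

Definition Dlt (L : R) : R := / L.
Definition eps1 (L : R) : R := 24 * exp (- L).

Definition Phi_plus (L x : R) : R :=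
  L * Rint (fun mu => Gam ((x - mu) * L))
           (- (1/2) - sqrt (Dlt L)) (1/2 + sqrt (Dlt L))
  + eps1 L * Gam x.

Definition Phi_minus (L x : R) : R :=
  L * Rint (fun mu => Gam ((x - mu) * L))
           (- (1/2) + sqrt (Dlt L)) (1/2 - sqrt (Dlt L))
  - eps1 L * Gam x.

Definition chi (x : R) : R :=
  if Rle_dec (- (1/2)) x then (if Rlt_dec x (1/2) then 1 else 0) else 0.

(* Main.v *)
Require Import Defs.
From Stdlib Require Import Reals Lra ClassicalEpsilon FunctionalExtensionality.
Open Scope R_scope.

Lemma Rint_val f a b (pr : Riemann_integrable f a b) : Rint f a b = RiemannInt pr.
Proof.
  unfold Rint.
  destruct (epsilon_spec (inhabits 0) (fun v => exists pr, RiemannInt pr = v)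
     (ex_intro _ (RiemannInt pr) (ex_intro _ pr eq_refl))) as [pr' H].
  rewrite <- H. apply RiemannInt_P5.
Qed.

Lemma cont_RI f a b : continuity f -> Riemann_integrable f a b.
Proof.
  intro Hc. destruct (Rle_dec a b).
  - apply continuity_implies_RiemannInt; auto.
  - apply RiemannInt_P1; apply continuity_implies_RiemannInt; auto; lra.
Qed.

Lemma FTC F f a b : (forall x, derivable_pt_lim F x (f x)) -> continuity f ->
  Rint f a b = F b - F a.
Proof.
  intros HF Hc.
  pose (d := fun x => exist (fun l => derivable_pt_abs F x l) (f x) (HF x)).
  pose (C := {| c1 := F; diff0 := d; cont1 := Hc |}).
  pose proof (FTC_Riemann C (cont_RI f a b Hc)) as H.
  rewrite (Rint_val f a b (cont_RI f a b Hc)). exact H.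
Qed.

Lemma cont_of_D f d : (forall x, derivable_pt_lim f x (d x)) -> continuity f.
Proof.
  intros H x. apply derivable_continuous_pt. exists (d x). apply H.
Qed.

Lemma Rint_mono f g a b : a <= b -> continuity f -> continuity g ->
  (forall x, a <= x <= b -> f x <= g x) -> Rint f a b <= Rint g a b.
Proof.
  intros hab cf cg H.
  rewrite (Rint_val f a b (cont_RI f a b cf)), (Rint_val g a b (cont_RI g a b cg)).
  apply RiemannInt_P19; auto. intros; apply H; lra.
Qed.

Lemma Rint_lin f g l a b : continuity f -> continuity g ->
  Rint (fun x => f x + l * g x) a b = Rint f a b + l * Rint g a b.
Proof.
  intros cf cg.
  rewrite (Rint_val f a b (cont_RI f a b cf)), (Rint_val g a b (cont_RI g a b cg)).
  rewrite (Rint_val _ a b (RiemannInt_P10 l (cont_RI f a b cf) (cont_RI g a b cg))).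
  apply RiemannInt_P13.
Qed.

Lemma Rint_prim f : continuity f -> forall x, derivable_pt_lim (fun t => Rint f 0 t) x (f x).
Proof.
  intros cf x.
  set (a := -(Rabs x + 1)). set (b := Rabs x + 1).
  assert (h : a <= b) by (unfold a, b; pose proof (Rabs_pos x); lra).
  assert (C0 : forall x, a <= x <= b -> continuity_pt f x) by (intros; apply cf).
  assert (Hx : a < x < b) by (unfold a, b; split; [pose proof (Rabs_pos x); destruct (Rcase_abs x); [rewrite Rabs_left|rewrite Rabs_right]; lra| pose proof (RRle_abs x); lra]).
  pose proof (@RiemannInt_P28 f a b x h C0 (conj (Rlt_le _ _ (proj1 Hx)) (Rlt_le _ _ (proj2 Hx)))) as HD.
  apply (derivable_pt_lim_locally_ext (fun z => primitive h (FTC_P1 h C0) z - Rint f a 0) _ x a b); auto.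
  - intros z Hz. unfold primitive.
    destruct (Rle_dec a z); [|lra]. destruct (Rle_dec z b); [|lra].
    rewrite <- (Rint_val f a z).
    rewrite (Rint_val f a z (cont_RI f a z cf)), (Rint_val f a 0 (cont_RI f a 0 cf)),
       (Rint_val f 0 z (cont_RI f 0 z cf)).
    rewrite <- (RiemannInt_P26 (cont_RI f a 0 cf) (cont_RI f 0 z cf) (cont_RI f a z cf)). ring.
  - replace (f x) with (f x - 0) by ring.
    apply derivable_pt_lim_minus; auto. apply derivable_pt_lim_const.
Qed.

Notation D := derivable_pt_lim.

Lemma Dl_eq f x l l' : D f x l -> l = l' -> D f x l'.
Proof. intros H ->; exact H. Qed.
Lemma Dplus f g x a b : D f x a -> D g x b -> D (fun y => f y + g y) x (a + b).
Proof. intros; apply (derivable_pt_lim_plus f g); auto. Qed.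
Lemma Dminus f g x a b : D f x a -> D g x b -> D (fun y => f y - g y) x (a - b).
Proof. intros; apply (derivable_pt_lim_minus f g); auto. Qed.
Lemma Dmult f g x a b : D f x a -> D g x b -> D (fun y => f y * g y) x (a * g x + f x * b).
Proof. intros; apply (derivable_pt_lim_mult f g); auto. Qed.
Lemma Dopp f x a : D f x a -> D (fun y => - f y) x (- a).
Proof. intros; apply (derivable_pt_lim_opp f); auto. Qed.
Lemma Dconst c x : D (fun _ => c) x 0.
Proof. apply derivable_pt_lim_const. Qed.
Lemma Did x : D (fun y => y) x 1.
Proof. apply derivable_pt_lim_id. Qed.
Lemma Dexp f x a : D f x a -> D (fun y => exp (f y)) x (exp (f x) * a).
Proof. intros H. apply (derivable_pt_lim_comp f exp); auto. apply derivable_pt_lim_exp. Qed.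
Lemma Dpow2 f x a : D f x a -> D (fun y => f y ^ 2) x (2 * f x * a).
Proof. intros H. apply (derivable_pt_lim_ext (fun y => f y * f y)). intro; simpl; ring.
  eapply Dl_eq. apply Dmult; exact H. ring. Qed.
Lemma Dpow2' f x a : D f x a -> D (fun y => (f y) ^ 2) x (2 * f x * a).
Proof. apply Dpow2. Qed.
Lemma Datan f x a : D f x a -> D (fun y => atan (f y)) x (/ (1 + (f x)^2) * a).
Proof. intros H. apply (derivable_pt_lim_comp f atan); auto. apply derivable_pt_lim_atan. Qed.

Definition Eg (t : R) : R := Rint Gam 0 t.

Lemma DGam0 x : D Gam x (-2 * PI * x * Gam x).
Proof. unfold Gam. eapply Dl_eq. apply Dexp. apply (Dmult (fun _ => -PI) (fun y => y^2)).
  apply Dconst. apply Dpow2, Did. cbv beta. ring. Qed.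

Lemma cont_Gam : continuity Gam.
Proof. apply (cont_of_D _ _ DGam0). Qed.

Lemma DEg0 x : D Eg x (Gam x).
Proof. apply (Rint_prim Gam cont_Gam). Qed.

Lemma DEg f x a : D f x a -> D (fun y => Eg (f y)) x (Gam (f x) * a).
Proof. intros H. apply (derivable_pt_lim_comp f Eg); auto. apply DEg0. Qed.
Lemma DGam f x a : D f x a -> D (fun y => Gam (f y)) x (-2 * PI * f x * Gam (f x) * a).
Proof. intros H. apply (derivable_pt_lim_comp f Gam); auto. apply DGam0. Qed.

Ltac dtac := first [ apply Dconst | apply Did | apply Dplus | apply Dminus | apply Dopp
  | apply DEg | apply DGam | apply Dexp | apply Datan | apply Dpow2 | apply Dmult ].
Ltac dsolve := eapply Dl_eq; [ repeat dtac | cbv beta ].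

Lemma Rint_Gam a b : Rint Gam a b = Eg b - Eg a.
Proof. apply FTC. apply DEg0. apply cont_Gam. Qed.

Lemma Eg0 : Eg 0 = 0.
Proof. pose proof (Rint_Gam 0 0). unfold Eg at 1 in H. lra. Qed.

Lemma Gam_opp x : Gam (- x) = Gam x.
Proof. unfold Gam. f_equal. ring. Qed.

Lemma Eg_opp t : Eg (- t) = - Eg t.
Proof.
  assert (H : Rint Gam 0 t = (fun y => - Eg (- y)) t - (fun y => - Eg (-y)) 0).
  { apply (FTC (fun y => - Eg (- y))). intro x. dsolve. rewrite Gam_opp. ring. apply cont_Gam. }
  unfold Eg at 2. rewrite H. simpl. replace (-0) with 0 by ring. rewrite Eg0. ring.
Qed.

Lemma Gam_pos x : 0 < Gam x.
Proof. apply exp_pos. Qed.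

Lemma Eg_mono a b : a <= b -> Eg a <= Eg b.
Proof.
  intro h. assert (0 <= Rint Gam a b).
  { replace 0 with (Rint (fun _ => 0) a b).
    apply Rint_mono; auto. intro; apply continuity_const; intros ? ?; auto.
    apply cont_Gam. intros; left; apply Gam_pos.
    rewrite (FTC (fun _ => 0) (fun _ => 0)). ring. intros; apply Dconst. intro; apply continuity_const; intros ? ?; auto. }
  rewrite Rint_Gam in H. lra.
Qed.

Lemma exp_le x y : x <= y -> exp x <= exp y.
Proof. intros [h|h]; [left; apply exp_increasing; auto| subst; lra]. Qed.

Lemma Cplus f g x : continuity_pt f x -> continuity_pt g x -> continuity_pt (fun y => f y + g y) x.
Proof. apply continuity_pt_plus. Qed.
Lemma Cminus f g x : continuity_pt f x -> continuity_pt g x -> continuity_pt (fun y => f y - g y) x.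
Proof. apply continuity_pt_minus. Qed.
Lemma Cmult f g x : continuity_pt f x -> continuity_pt g x -> continuity_pt (fun y => f y * g y) x.
Proof. apply continuity_pt_mult. Qed.
Lemma Copp f x : continuity_pt f x -> continuity_pt (fun y => - f y) x.
Proof. apply continuity_pt_opp. Qed.
Lemma Cdiv f g x : continuity_pt f x -> continuity_pt g x -> g x <> 0 -> continuity_pt (fun y => f y / g y) x.
Proof. apply continuity_pt_div. Qed.
Lemma Cinv f x : continuity_pt f x -> f x <> 0 -> continuity_pt (fun y => / f y) x.
Proof. apply continuity_pt_inv. Qed.
Lemma Cconst c x : continuity_pt (fun _ => c) x.
Proof. apply continuity_pt_const. intros ? ?; auto. Qed.
Lemma Cid x : continuity_pt (fun y => y) x.
Proof. apply derivable_continuous_pt. exists 1. apply Did. Qed.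
Lemma Ccomp g f x : continuity g -> continuity_pt f x -> continuity_pt (fun y => g (f y)) x.
Proof. intros Hg Hf. apply (continuity_pt_comp f g x Hf (Hg (f x))). Qed.
Lemma cont_exp : continuity exp.
Proof. apply (cont_of_D _ _ derivable_pt_lim_exp). Qed.
Lemma cont_Eg : continuity Eg.
Proof. apply (cont_of_D _ _ DEg0). Qed.
Lemma Cpow2 f x : continuity_pt f x -> continuity_pt (fun y => f y ^ 2) x.
Proof. intro H. assert (E : (fun y => f y ^ 2) = (fun y => f y * f y)).
  { apply functional_extensionality; intro; simpl; ring. } rewrite E. apply Cmult; auto. Qed.

Ltac ctac := first [ apply Cconst | apply Cid | apply Cplus | apply Cminus | apply Copp
  | apply (Ccomp Eg); [apply cont_Eg|] | apply (Ccomp Gam); [apply cont_Gam|]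
  | apply (Ccomp exp); [apply cont_exp|] | apply Cpow2 | apply Cdiv | apply Cinv | apply Cmult ].

Lemma taylor2 (f f1 f2 : R -> R) M t s :
  (forall u, D f u (f1 u)) -> (forall u, D f1 u (f2 u)) -> (forall u, Rabs (f2 u) <= M) ->
  Rabs (f (t + s) - f t - s * f1 t) <= M * s ^ 2.
Proof.
  intros H1 H2 HM.
  destruct (MVT_abs (fun u => f u - u * f1 t) (fun u => f1 u - f1 t) t (t + s)) as [xi [Hxi Hr]].
  { intros c _. eapply Dl_eq. apply Dminus. apply H1. apply (Dmult (fun u => u) (fun _ => f1 t)).
    apply Did. apply Dconst. cbv beta. ring. }
  destruct (MVT_abs f1 f2 t xi) as [eta [Heta _]].
  { intros; apply H2. }
  replace (f (t + s) - f t - s * f1 t) with (f (t + s) - (t + s) * f1 t - (f t - t * f1 t)) by ring.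
  rewrite Hxi. rewrite Heta.
  replace (t + s - t) with s by ring.
  assert (Rabs (xi - t) <= Rabs s).
  { unfold Rmin, Rmax in Hr. destruct (Rle_dec t (t+s)); unfold Rabs;
    destruct (Rcase_abs (xi - t)); destruct (Rcase_abs s); lra. }
  pose proof (HM eta). pose proof (Rabs_pos (xi - t)). pose proof (Rabs_pos s).
  pose proof (Rabs_pos (f2 eta)).
  replace (s ^ 2) with (Rabs s * Rabs s) by (rewrite <- Rabs_mult; simpl; rewrite Rmult_1_r; apply Rabs_right; nra).
  rewrite <- Rmult_assoc.
  apply Rmult_le_compat; auto. apply Rmult_le_pos; auto.
  apply Rmult_le_compat; auto. lra.
Qed.

Lemma phi_taylor c t s : 0 < c ->
  Rabs (exp (- c * (t + s) ^ 2) / c - exp (- c * t ^ 2) / c - s * (-2 * t * exp (- c * t ^ 2)))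
   <= 6 * s ^ 2.
Proof.
  intro hc.
  apply (taylor2 (fun u => exp (- c * u ^ 2) / c) (fun u => -2 * u * exp (- c * u ^ 2))
     (fun u => (-2 + 4 * c * u ^ 2) * exp (- c * u ^ 2))).
  - intro u. apply (derivable_pt_lim_ext (fun u => exp (- c * u ^ 2) * / c)). intro; reflexivity.
    dsolve. field. lra.
  - intro u. dsolve. ring.
  - intro u. set (y := c * u ^ 2).
    assert (hy : 0 <= y) by (unfold y; apply Rmult_le_pos; [lra| apply pow2_ge_0]).
    assert (E1 : exp (- c * u ^ 2) = / exp y) by (unfold y; rewrite <- exp_Ropp; f_equal; ring).
    rewrite E1. pose proof (exp_pos y). pose proof (exp_ineq1_le y).
    assert (0 < / exp y <= 1). { split. apply Rinv_0_lt_compat; auto.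
      rewrite <- Rinv_1. apply Rinv_le_contravar; lra. }
    assert (y * / exp y <= 1). { apply (Rmult_le_reg_r (exp y)); auto.
      rewrite Rmult_assoc, Rinv_l; lra. }
    replace (4 * c * u ^ 2) with (4 * y) by (unfold y; ring).
    rewrite Rabs_mult, (Rabs_right (/ exp y)) by lra.
    unfold Rabs; destruct (Rcase_abs (-2 + 4 * y)); nra.
Qed.

Definition kk (t x : R) := exp (- (PI * (1 + x ^ 2)) * t ^ 2) / (PI * (1 + x ^ 2)).
Definition dk (t x : R) := -2 * t * exp (- (PI * (1 + x ^ 2)) * t ^ 2).
Definition gg (t : R) := Rint (kk t) 0 1.

Lemma den_pos x : 0 < PI * (1 + x ^ 2).
Proof. apply Rmult_lt_0_compat. apply PI_RGT_0. pose proof (pow2_ge_0 x); lra. Qed.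

Lemma cont_kk t : continuity (kk t).
Proof. intro x. unfold kk. repeat ctac. cbv beta. pose proof (den_pos x); lra. Qed.
Lemma cont_dk t : continuity (dk t).
Proof. intro x. unfold dk. repeat ctac. Qed.

Lemma Rint_const c a b : Rint (fun _ => c) a b = c * (b - a).
Proof. rewrite (FTC (fun x => c * x) (fun _ => c)). ring. intro; dsolve. ring.
  intro; apply Cconst. Qed.

Lemma Rint_bound f a b M : a <= b -> continuity f -> (forall x, a <= x <= b -> Rabs (f x) <= M) ->
  Rabs (Rint f a b) <= M * (b - a).
Proof.
  intros hab cf H.
  assert (H1 : Rint f a b <= Rint (fun _ => M) a b).
  { apply Rint_mono; auto. intro; apply Cconst. intros x hx; pose proof (H x hx);
    pose proof (Rle_abs (f x)); lra. }
  assert (H2 : Rint (fun _ => -M) a b <= Rint f a b).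
  { apply Rint_mono; auto. intro; apply Cconst. intros x hx; pose proof (H x hx);
    pose proof (Rabs_pos (f x)); unfold Rabs in *; destruct (Rcase_abs (f x)); lra. }
  rewrite Rint_const in H1, H2. unfold Rabs; destruct (Rcase_abs (Rint f a b)); lra.
Qed.

Lemma Dgg t : D gg t (Rint (dk t) 0 1).
Proof.
  intros eps heps.
  assert (hd : 0 < eps / 7) by lra.
  exists (mkposreal _ hd). intros h hh hlt. simpl in hlt.
  assert (Hdiff : gg (t + h) - gg t - h * Rint (dk t) 0 1 =
     Rint (fun x => (kk (t + h) x + (-1) * kk t x) + (- h) * dk t x) 0 1).
  { rewrite Rint_lin. rewrite Rint_lin. unfold gg. ring.
    apply cont_kk. apply cont_kk. intro x; apply Cplus; [apply cont_kk| apply Cmult; [apply Cconst| apply cont_kk]].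
    apply cont_dk. }
  assert (Hb : Rabs (gg (t + h) - gg t - h * Rint (dk t) 0 1) <= 6 * h ^ 2 * (1 - 0)).
  { rewrite Hdiff. apply Rint_bound. lra.
    intro x; apply Cplus; [apply Cplus; [apply cont_kk| apply Cmult; [apply Cconst| apply cont_kk]]|apply Cmult; [apply Cconst| apply cont_dk]].
    intros x _. unfold kk, dk.
    pose proof (phi_taylor (PI * (1 + x ^ 2)) t h (den_pos x)).
    replace (exp (- (PI * (1 + x ^ 2)) * (t + h) ^ 2) / (PI * (1 + x ^ 2)) +
       -1 * (exp (- (PI * (1 + x ^ 2)) * t ^ 2) / (PI * (1 + x ^ 2))) +
       - h * (-2 * t * exp (- (PI * (1 + x ^ 2)) * t ^ 2)))
     with (exp (- (PI * (1 + x ^ 2)) * (t + h) ^ 2) / (PI * (1 + x ^ 2)) -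
       exp (- (PI * (1 + x ^ 2)) * t ^ 2) / (PI * (1 + x ^ 2)) -
       h * (-2 * t * exp (- (PI * (1 + x ^ 2)) * t ^ 2))) by ring.
    exact H. }
  replace ((gg (t + h) - gg t) / h - Rint (dk t) 0 1) with
     ((gg (t + h) - gg t - h * Rint (dk t) 0 1) / h) by (field; auto).
  unfold Rdiv. rewrite Rabs_mult, Rabs_inv.
  apply (Rmult_lt_reg_r (Rabs h)). apply Rabs_pos_lt; auto.
  rewrite Rmult_assoc, Rinv_l by (apply Rabs_no_R0; auto).
  replace (h ^ 2) with (Rabs h * Rabs h) in Hb by (rewrite <- Rabs_mult; simpl; rewrite Rmult_1_r; apply Rabs_right; nra).
  pose proof (Rabs_pos_lt h hh). nra.
Qed.

Lemma PI_gt3 : 3 < PI.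
Proof. pose proof PI2_3_2. lra. Qed.

Lemma Rint_dk t : Rint (dk t) 0 1 = -2 * Gam t * Eg t.
Proof.
  rewrite (FTC (fun x => -2 * Gam t * Eg (t * x)) (dk t)).
  - rewrite Rmult_0_r, Rmult_1_r, Eg0. ring.
  - intro x. dsolve. unfold dk, Gam.
    replace (- (PI * (1 + x ^ 2)) * t ^ 2) with (- PI * t ^ 2 + - PI * (t * x) ^ 2) by ring.
    rewrite exp_plus. ring.
  - apply cont_dk.
Qed.

Lemma gg0 : gg 0 = 1 / 4.
Proof.
  unfold gg. rewrite (FTC (fun x => atan x * / PI) (kk 0)).
  - rewrite atan_1, atan_0. field. apply PI_neq0.
  - intro x. dsolve. unfold kk. replace (- (PI * (1 + x ^ 2)) * 0 ^ 2) with 0 by ring.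
    rewrite exp_0. field. pose proof (pow2_ge_0 x). pose proof PI_RGT_0. split; lra.
  - apply cont_kk.
Qed.

Lemma gg_bound t : 0 <= gg t <= Gam t / PI.
Proof.
  unfold gg. split.
  - apply Rle_trans with (Rint (fun _ => 0) 0 1). right; rewrite Rint_const; ring.
    apply Rint_mono. lra. intro; apply Cconst. apply cont_kk.
    intros x _. unfold kk. left. apply Rdiv_lt_0_compat. apply exp_pos. apply den_pos.
  - replace (Gam t / PI) with (Rint (fun _ => Gam t / PI) 0 1) by (rewrite Rint_const; ring).
    apply Rint_mono. lra. apply cont_kk. intro; apply Cconst.
    intros x _. unfold kk, Gam, Rdiv. pose proof PI_RGT_0.
    apply Rmult_le_compat. left; apply exp_pos. left; apply Rinv_0_lt_compat, den_pos.
    apply exp_le. assert (0 <= PI * x ^ 2 * t ^ 2) by (apply Rmult_le_pos; [apply Rmult_le_pos; [lra|apply pow2_ge_0]|apply pow2_ge_0]). lra.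
    apply Rinv_le_contravar. auto. pose proof (pow2_ge_0 x). nra.
Qed.

Lemma FF_const t : 0 <= t -> Eg t ^ 2 + gg t = 1 / 4.
Proof.
  intros [ht|ht].
  - destruct (MVT_cor2 (fun u => Eg u ^ 2 + gg u) (fun _ => 0) 0 t ht) as [c [Hc _]].
    + intros c _. eapply Dl_eq. apply Dplus. apply Dpow2. apply DEg0. apply Dgg.
      rewrite Rint_dk. ring.
    + rewrite Eg0, gg0 in Hc. lra.
  - subst. rewrite Eg0, gg0. ring.
Qed.

Lemma Eg_tail t : 0 <= t -> 0 <= Eg t /\ 0 <= 1/2 - Eg t <= Gam t.
Proof.
  intro ht. pose proof (FF_const t ht). pose proof (gg_bound t).
  pose proof (Eg_mono 0 t ht). rewrite Eg0 in H1. pose proof PI_gt3.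
  pose proof (Gam_pos t).
  assert (Eg t <= 1/2) by nra.
  assert (Gam t / PI <= Gam t / 2).
  { unfold Rdiv. apply Rmult_le_compat_l. lra. apply Rinv_le_contravar; lra. }
  split; auto. split. lra. nra.
Qed.

Lemma Eg_tail_neg t : t <= 0 -> Eg t <= 0 /\ 0 <= Eg t + 1/2 <= Gam t.
Proof.
  intro ht. replace t with (- (- t)) by ring. rewrite Eg_opp, Gam_opp.
  pose proof (Eg_tail (- t)). lra.
Qed.

Lemma Eg_abs t : -(1/2) <= Eg t <= 1/2.
Proof.
  destruct (Rle_dec 0 t). pose proof (Eg_tail t r); lra.
  pose proof (Eg_tail_neg t); lra.
Qed.

Lemma T_eq L x p q : L <> 0 ->
  L * Rint (fun mu => Gam ((x - mu) * L)) p q = Eg ((x - p) * L) - Eg ((x - q) * L).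
Proof.
  intro hL.
  rewrite (FTC (fun mu => - Eg ((x - mu) * L) * / L)).
  - field. auto.
  - intro mu. dsolve. field. auto.
  - intro mu. repeat ctac.
Qed.

Lemma Phi_plus_eq L x : L <> 0 -> Phi_plus L x =
  Eg ((x - (- (1/2) - sqrt (Dlt L))) * L) - Eg ((x - (1/2 + sqrt (Dlt L))) * L) + eps1 L * Gam x.
Proof. intro hL. unfold Phi_plus. rewrite T_eq; auto. Qed.

Lemma Phi_minus_eq L x : L <> 0 -> Phi_minus L x =
  Eg ((x - (- (1/2) + sqrt (Dlt L))) * L) - Eg ((x - (1/2 - sqrt (Dlt L))) * L) - eps1 L * Gam x.
Proof. intro hL. unfold Phi_minus. rewrite T_eq; auto. Qed.

Lemma key_ineq u r : 0 <= u -> 2 <= r ->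
  Gam (u * r ^ 2 + r) <= exp (- r ^ 2) * Gam (u + 1/2).
Proof.
  intros hu hr. unfold Gam. rewrite <- exp_plus. apply exp_le.
  pose proof PI_gt3.
  assert (r2 : 4 <= r ^ 2) by nra.
  assert (e4 : r ^ 4 = r ^ 2 * r ^ 2) by ring.
  assert (e3 : r ^ 3 = r ^ 2 * r) by ring.
  assert (h2 : 0 <= r ^ 4 - 1) by nra.
  assert (h3 : 0 <= 2 * r ^ 3 - 1) by nra.
  assert (h4 : 0 <= PI * u ^ 2 * (r ^ 4 - 1)) by (apply Rmult_le_pos; [apply Rmult_le_pos; [lra|apply pow2_ge_0]|auto]).
  assert (h5 : 0 <= PI * u * (2 * r ^ 3 - 1)) by (apply Rmult_le_pos; [apply Rmult_le_pos; lra|auto]).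
  assert (h6 : 0 <= (PI - 1) * r ^ 2 - PI / 4) by nra.
  replace (- PI * (u * r ^ 2 + r) ^ 2) with
    (- (PI * u ^ 2 * (r ^ 4 - 1)) - PI * u * (2 * r ^ 3 - 1) - ((PI - 1) * r ^ 2 - PI / 4)
     + (- r ^ 2 + - PI * (u + 1 / 2) ^ 2)) by field.
  lra.
Qed.

Lemma ineqs L x : 2 < L -> Phi_minus L x <= chi x /\ chi x <= Phi_plus L x.
Proof.
  intro HL. assert (hL0 : L <> 0) by lra.
  rewrite Phi_minus_eq, Phi_plus_eq by auto.
  set (s := sqrt (Dlt L)).
  assert (hs : 0 < s) by (apply sqrt_lt_R0; unfold Dlt; apply Rinv_0_lt_compat; lra).
  assert (hss : s * s = / L) by (apply sqrt_sqrt; unfold Dlt; left; apply Rinv_0_lt_compat; lra).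
  set (r := s * L).
  assert (hr2 : r ^ 2 = L) by (unfold r; simpl; replace (s * L * (s * L * 1)) with (s * s * L * L) by ring;
     rewrite hss; field; auto).
  assert (hr : 0 < r) by (unfold r; apply Rmult_lt_0_compat; lra).
  assert (heps : 0 < eps1 L) by (unfold eps1; pose proof (exp_pos (- L)); lra).
  pose proof (Gam_pos x) as hGx.
  pose proof (Eg_abs ((x - (- (1 / 2) + s)) * L)).
  pose proof (Eg_abs ((x - (1 / 2 - s)) * L)).
  unfold chi. destruct (Rle_dec (- (1 / 2)) x) as [h1|h1]; [destruct (Rlt_dec x (1/2)) as [h2|h2]|].
  -
    split.
    + pose proof (Rmult_lt_0_compat _ _ heps hGx). lra.
    + set (A := (x - (- (1 / 2) - s)) * L). set (B := (x - (1 / 2 + s)) * L).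
      assert (hA : r <= A) by (unfold A, r; nra).
      assert (hB : B <= - r) by (unfold B, r; nra).
      pose proof (Eg_mono _ _ hA). pose proof (Eg_mono _ _ hB).
      rewrite Eg_opp in H2. pose proof (Eg_tail r (Rlt_le _ _ hr)).
      assert (Gam r <= exp (- L) * Gam x).
      { unfold Gam. rewrite <- exp_plus. apply exp_le. rewrite <- hr2.
        pose proof PI_gt3. assert (x ^ 2 <= 1/4) by nra. nra. }
      unfold eps1. nra.
  -
    split.
    + destruct (Rle_dec (1/2) s) as [hs2|hs2].
      * assert (Eg ((x - (- (1 / 2) + s)) * L) <= Eg ((x - (1 / 2 - s)) * L)).
        { apply Eg_mono. nra. }
        pose proof (Rmult_lt_0_compat _ _ heps hGx). lra.
      * assert (hr2' : 2 <= r). { assert (4 <= r ^ 2). { rewrite hr2. destruct (Rle_dec 4 L) as [|n]; auto.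
          assert (/4 <= /L) by (apply Rinv_le_contravar; lra). nra. } nra. }
        set (u := x - 1/2).
        assert (hu : 0 <= u) by (unfold u; lra).
        assert (EB : (x - (1 / 2 - s)) * L = u * r ^ 2 + r) by (rewrite hr2; unfold u, r; ring).
        rewrite EB. pose proof (Eg_tail (u * r ^ 2 + r)) as T1.
        assert (P0 : 0 <= u * r ^ 2 + r) by nra.
        pose proof (key_ineq u r hu hr2') as K. replace (exp (- r ^ 2)) with (exp (- L)) in K by (rewrite hr2; auto).
        replace (u + 1/2) with x in K by (unfold u; ring).
        unfold eps1. pose proof (Rmult_lt_0_compat _ _ (exp_pos (- L)) hGx). destruct (T1 P0). lra.
    + pose proof (Eg_mono ((x - (1 / 2 + s)) * L) ((x - (- (1 / 2) - s)) * L)).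
      pose proof (Rmult_lt_0_compat _ _ heps hGx). assert ((x - (1 / 2 + s)) * L <= (x - (- (1 / 2) - s)) * L) by nra. 
      lra.
  -
    split.
    + destruct (Rle_dec (1/2) s) as [hs2|hs2].
      * assert (Eg ((x - (- (1 / 2) + s)) * L) <= Eg ((x - (1 / 2 - s)) * L)).
        { apply Eg_mono. nra. }
        pose proof (Rmult_lt_0_compat _ _ heps hGx). lra.
      * assert (hr2' : 2 <= r). { assert (4 <= r ^ 2). { rewrite hr2. destruct (Rle_dec 4 L) as [|n]; auto.
          assert (/4 <= /L) by (apply Rinv_le_contravar; lra). nra. } nra. }
        set (u := - (1/2) - x).
        assert (hu : 0 <= u) by (unfold u; lra).
        assert (EA : (x - (- (1 / 2) + s)) * L = - (u * r ^ 2 + r)) by (rewrite hr2; unfold u, r; ring).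
        rewrite EA. pose proof (Eg_tail_neg (- (u * r ^ 2 + r))) as T1.
        assert (P0 : 0 <= u * r ^ 2 + r) by nra.
        pose proof (key_ineq u r hu hr2') as K. replace (exp (- r ^ 2)) with (exp (- L)) in K by (rewrite hr2; auto).
        rewrite Gam_opp in T1.
        replace (Gam (u + 1/2)) with (Gam x) in K by (unfold u; rewrite <- Gam_opp; f_equal; ring).
        unfold eps1. pose proof (Rmult_lt_0_compat _ _ (exp_pos (- L)) hGx). destruct T1 as [T1 T2]. lra. lra.
    + pose proof (Eg_mono ((x - (1 / 2 + s)) * L) ((x - (- (1 / 2) - s)) * L)).
      pose proof (Rmult_lt_0_compat _ _ heps hGx). assert ((x - (1 / 2 + s)) * L <= (x - (- (1 / 2) - s)) * L) by nra. 
      lra.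
Qed.

Definition P (t : R) := t * Eg t + Gam t / (2 * PI).

Lemma DP t : D P t (Eg t).
Proof. unfold P. apply (derivable_pt_lim_ext (fun t => t * Eg t + Gam t * / (2 * PI))).
  intro; reflexivity. dsolve. field. apply PI_neq0. Qed.

Lemma decay t : 1 <= t -> (t + 1) * Gam t <= 1 / t.
Proof.
  intro ht. unfold Gam.
  assert (E1 : exp (- PI * t ^ 2) = / exp (PI * t ^ 2)) by (rewrite <- exp_Ropp; f_equal; ring).
  rewrite E1. pose proof (exp_pos (PI * t ^ 2)). pose proof (exp_ineq1_le (PI * t ^ 2)).
  pose proof PI_gt3.
  assert (t * (t + 1) <= exp (PI * t ^ 2)) by nra.
  apply (Rmult_le_reg_l t). lra. apply (Rmult_le_reg_r (exp (PI * t ^ 2))). auto.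
  replace (t * ((t + 1) * / exp (PI * t ^ 2)) * exp (PI * t ^ 2)) with (t * (t + 1))
    by (field; lra).
  replace (t * (1 / t) * exp (PI * t ^ 2)) with (exp (PI * t ^ 2)) by (field; lra). auto.
Qed.

Lemma Ptail y : 1 <= y -> Rabs (P y - y / 2) <= 1 / y.
Proof.
  intro hy. pose proof (decay y hy). destruct (Eg_tail y) as [_ [h1 h2]]. lra.
  pose proof (Gam_pos y). pose proof PI_gt3.
  assert (0 <= Gam y / (2 * PI) <= Gam y).
  { split. left; apply Rdiv_lt_0_compat; lra. unfold Rdiv.
    pose proof (Rinv_le_contravar 1 (2 * PI) ltac:(lra) ltac:(lra)) as HI. rewrite Rinv_1 in HI. nra. }
  assert (y * (1/2 - Eg y) <= y * Gam y) by nra.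
  assert (0 <= y * (1/2 - Eg y)) by nra.
  unfold P. apply Rle_trans with ((y + 1) * Gam y); auto.
  unfold Rabs. destruct (Rcase_abs (y * Eg y + Gam y / (2 * PI) - y / 2)); nra.
Qed.

Lemma Ptail_neg y : y <= -1 -> Rabs (P y + y / 2) <= 1 / (- y).
Proof.
  intro hy. pose proof (Ptail (- y) ltac:(lra)).
  unfold P in *. rewrite Eg_opp, Gam_opp in H.
  replace (y * Eg y + Gam y / (2 * PI) + y / 2) with (- y * - Eg y + Gam y / (2 * PI) - - y / 2) by (field; apply PI_neq0).
  auto.
Qed.

Lemma inv_small y e : 0 < e -> 100 / e <= y -> 1 / y <= e / 100.
Proof.
  intros he hy. assert (0 < 100 / e) by (apply Rdiv_lt_0_compat; lra).
  replace (e / 100) with (1 / (100 / e)) by (field; lra).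
  unfold Rdiv. rewrite !Rmult_1_l. apply Rinv_le_contravar; auto.
Qed.

Lemma improper_gen f Q l1 l2 : continuity f -> (forall x, D Q x (f x)) ->
  (forall eps, 0 < eps -> exists M, forall x, M <= x -> Rabs (Q x - l2) < eps) ->
  (forall eps, 0 < eps -> exists M, forall x, x <= - M -> Rabs (Q x - l1) < eps) ->
  improper_int_R f (l2 - l1).
Proof.
  intros cf HQ H2 H1. split.
  - intros a b. constructor. apply cont_RI; auto.
  - intros eps heps. destruct (H2 (eps/2)) as [M2 HM2]. lra.
    destruct (H1 (eps/2)) as [M1 HM1]. lra.
    exists (Rmax M1 M2). intros a b ha hb.
    rewrite (FTC Q f) by auto.
    pose proof (HM2 b ltac:(pose proof (Rmax_r M1 M2); lra)).
    pose proof (HM1 a ltac:(pose proof (Rmax_l M1 M2); lra)).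
    replace (Q b - Q a - (l2 - l1)) with ((Q b - l2) - (Q a - l1)) by ring.
    unfold Rabs in *. destruct (Rcase_abs (Q b - l2 - (Q a - l1)));
      destruct (Rcase_abs (Q b - l2)); destruct (Rcase_abs (Q a - l1)); lra.
Qed.

Lemma improper_Phi L p q c : 1 <= L -> Rabs c <= 24 ->
  improper_int_R (fun x => Eg ((x - p) * L) - Eg ((x - q) * L) + c * Gam x) ((q - p) + c).
Proof.
  intros hL hc.
  replace ((q - p) + c) with (((q - p) / 2 + c / 2) - (- ((q - p) / 2 + c / 2))) by field.
  apply (improper_gen _ (fun x => (P ((x - p) * L) - P ((x - q) * L)) / L + c * Eg x)).
  - intro x. repeat ctac.
  - intro x. apply (derivable_pt_lim_ext (fun x => (P ((x - p) * L) - P ((x - q) * L)) * / L + c * Eg x)).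
    intro; reflexivity.
    eapply Dl_eq. apply Dplus. apply Dmult.
    apply Dminus; apply (derivable_pt_lim_comp _ P); [dsolve; reflexivity|apply DP|dsolve; reflexivity|apply DP].
    apply Dconst. apply Dmult. apply Dconst. apply DEg0.
    cbv beta. field. lra.
  - intros eps heps. exists (Rabs p + Rabs q + 1 + 100 / eps). intros x hx.
    assert (h100 : 0 < 100 / eps) by (apply Rdiv_lt_0_compat; lra).
    pose proof (Rle_abs p). pose proof (Rle_abs q). pose proof (Rabs_pos p). pose proof (Rabs_pos q).
    assert (hy1 : 100 / eps <= (x - p) * L) by nra.
    assert (hy2 : 100 / eps <= (x - q) * L) by nra.
    assert (hx1 : 100 / eps <= x) by lra.
    pose proof (Ptail ((x - p) * L) ltac:(nra)) as B1.
    pose proof (Ptail ((x - q) * L) ltac:(nra)) as B2.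
    pose proof (inv_small _ _ heps hy1). pose proof (inv_small _ _ heps hy2).
    pose proof (inv_small _ _ heps hx1).
    destruct (Eg_tail x ltac:(lra)) as [_ [T1 T2]].
    pose proof (decay x ltac:(lra)) as G0.
    assert (G1 : Gam x <= eps / 100).
    { pose proof (Gam_pos x). nra. }
    set (z := P ((x - p) * L) - (x - p) * L / 2 - (P ((x - q) * L) - (x - q) * L / 2)).
    assert (Hz : Rabs z <= 2 * (eps / 100)).
    { unfold z. eapply Rle_trans. apply Rabs_triang. rewrite Rabs_Ropp. lra. }
    replace ((P ((x - p) * L) - P ((x - q) * L)) / L + c * Eg x - ((q - p) / 2 + c / 2))
      with (z * / L + c * - (1/2 - Eg x)) by (unfold z; field; lra).
    eapply Rle_lt_trans. apply Rabs_triang. rewrite !Rabs_mult, Rabs_Ropp.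
    rewrite (Rabs_right (/ L)) by (left; apply Rinv_0_lt_compat; lra).
    rewrite (Rabs_right (1/2 - Eg x)) by lra.
    assert (/ L <= 1) by (rewrite <- Rinv_1; apply Rinv_le_contravar; lra).
    assert (0 < / L) by (apply Rinv_0_lt_compat; lra).
    pose proof (Rabs_pos z). pose proof (Rabs_pos c).
    assert (Rabs z * / L <= 2 * (eps / 100)) by nra.
    assert (Rabs c * (1/2 - Eg x) <= 24 * (eps / 100)) by nra.
    lra.
  - intros eps heps. exists (Rabs p + Rabs q + 1 + 100 / eps). intros x hx.
    assert (h100 : 0 < 100 / eps) by (apply Rdiv_lt_0_compat; lra).
    pose proof (Rle_abs (-p)). pose proof (Rle_abs (-q)). rewrite Rabs_Ropp in *.
    pose proof (Rabs_pos p). pose proof (Rabs_pos q).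
    assert (hy1 : 100 / eps <= - ((x - p) * L)) by nra.
    assert (hy2 : 100 / eps <= - ((x - q) * L)) by nra.
    assert (hx1 : 100 / eps <= - x) by lra.
    pose proof (Ptail_neg ((x - p) * L) ltac:(nra)) as B1.
    pose proof (Ptail_neg ((x - q) * L) ltac:(nra)) as B2.
    pose proof (inv_small _ _ heps hy1). pose proof (inv_small _ _ heps hy2).
    pose proof (inv_small _ _ heps hx1).
    destruct (Eg_tail_neg x ltac:(lra)) as [_ [T1 T2]].
    pose proof (decay (- x) ltac:(lra)) as G0. rewrite Gam_opp in G0.
    assert (G1 : Gam x <= eps / 100).
    { pose proof (Gam_pos x). nra. }
    set (z := P ((x - p) * L) + (x - p) * L / 2 - (P ((x - q) * L) + (x - q) * L / 2)).
    assert (Hz : Rabs z <= 2 * (eps / 100)).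
    { unfold z. eapply Rle_trans. apply Rabs_triang. rewrite Rabs_Ropp. lra. }
    replace ((P ((x - p) * L) - P ((x - q) * L)) / L + c * Eg x - - ((q - p) / 2 + c / 2))
      with (z * / L + c * (Eg x + 1/2)) by (unfold z; field; lra).
    eapply Rle_lt_trans. apply Rabs_triang. rewrite !Rabs_mult.
    rewrite (Rabs_right (/ L)) by (left; apply Rinv_0_lt_compat; lra).
    rewrite (Rabs_right (Eg x + 1/2)) by lra.
    assert (/ L <= 1) by (rewrite <- Rinv_1; apply Rinv_le_contravar; lra).
    assert (0 < / L) by (apply Rinv_0_lt_compat; lra).
    pose proof (Rabs_pos z). pose proof (Rabs_pos c).
    assert (Rabs z * / L <= 2 * (eps / 100)) by nra.
    assert (Rabs c * (Eg x + 1/2) <= 24 * (eps / 100)) by nra.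
    lra.
Qed.

Theorem lemma3p1 (L : R) (HL : 2 < L) :
  (forall x : R, Phi_minus L x <= chi x /\ chi x <= Phi_plus L x) /\
  improper_int_R (Phi_plus L) (1 + (2 * sqrt (Dlt L) + eps1 L)) /\
  improper_int_R (Phi_minus L) (1 - (2 * sqrt (Dlt L) + eps1 L)).
Proof.
  assert (hL0 : L <> 0) by lra.
  assert (he : 0 < eps1 L <= 24).
  { unfold eps1. pose proof (exp_pos (- L)). pose proof (exp_le (- L) 0 ltac:(lra)).
    rewrite exp_0 in H0. lra. }
  split; [|split].
  - intro x. apply ineqs; auto.
  - assert (E : Phi_plus L = fun x => Eg ((x - (- (1/2) - sqrt (Dlt L))) * L)
        - Eg ((x - (1/2 + sqrt (Dlt L))) * L) + eps1 L * Gam x).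
    { apply functional_extensionality; intro x; apply Phi_plus_eq; auto. }
    rewrite E.
    replace (1 + (2 * sqrt (Dlt L) + eps1 L)) with
      ((1/2 + sqrt (Dlt L)) - (- (1/2) - sqrt (Dlt L)) + eps1 L) by field.
    apply improper_Phi. lra. rewrite Rabs_right; lra.
  - assert (E : Phi_minus L = fun x => Eg ((x - (- (1/2) + sqrt (Dlt L))) * L)
        - Eg ((x - (1/2 - sqrt (Dlt L))) * L) + (- eps1 L) * Gam x).
    { apply functional_extensionality; intro x; rewrite Phi_minus_eq; auto; ring. }
    rewrite E.
    replace (1 - (2 * sqrt (Dlt L) + eps1 L)) with
      ((1/2 - sqrt (Dlt L)) - (- (1/2) + sqrt (Dlt L)) + - eps1 L) by field.
    apply improper_Phi. lra. rewrite Rabs_Ropp, Rabs_right; lra.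
Qed.
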